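(* Under standing assumption (S), let $R$ be a commutative $D$-module algebra which is Noetherian as a ring and simple as a $D$-module algebra, and assume each $g\in G$ acts as an injective endomorphism of $R$. Let $G$ act on $\Omega(R)$ from the right by $P.g=g^{-1}(P)$, let $G_P=\{g\in G:g^{-1}(P)=P\}$ and $G_{\Omega(R)}=\bigcap_{Q\in\Omega(R)}G_Q$. Then: (1) every $P\in\Omega(R)$ is $D^1$-stable, so that $R/P$ is a $D(G_P)$-module domain, and $R/P$ is simple as a $D(G_{\Omega(R)})$-module algebra; (2) the action of $G$ on $\Omega(R)$ is transitive (in particular the stabilizers $G_P$ are conjugate); (3) the natural map $R\to\prod_{P\in\Omega(R)}R/P$ is an isomorphism.
   Context: Standing assumption (S): $C$ is a field, $G$ a monoid, $CG$ the monoid algebra as a $C$-bialgebra with $\Delta(g)=g\otimes g$, $\varepsilon(g)=1$; $D^1$ is a pointed irreducible cocommutative Hopf algebra over $C$ of Birkhoff–Witt type (as a coalgebra the cofree pointed irreducible cocommutative coalgebra $B(U)$ on some $C$-vector space $U$, in Sweedler's sense) which is a $CG$-module algebra; $D=D^1\#CG$ is the smash product and $D(G')=D^1\#CG'$ for a submonoid $G'$. A $D$-module algebra is a $C$-algebra with a $D$-action satisfying $d.(ab)=\sum(d_{(1)}.a)(d_{(2)}.b)$, $d.1=\varepsilon(d)1$; each $g\in G$ acts as a $C$-algebra endomorphism $a\mapsto g.a$, and $g^{-1}(P)$ is the preimage of $P$. An ideal $I$ is $D$-stable (resp. $D^1$-stable) if $d.I\subseteq I$ for all $d\in D$ (resp.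 $D^1$); $R$ is simple if its only $D$-stable ideals are $0$ and $R$. $\Omega(R)$ is the set of minimal prime ideals of $R$. *)

(* Defs.v *)
From HB Require Import structures.
From mathcomp Require Import all_boot all_order all_algebra.
Set Implicit Arguments. Unset Strict Implicit. Unset Printing Implicit Defensive.
Import GRing.Theory.
Local Open Scope ring_scope.

(* Linear algebra over a field C, without tensor products: elements   *)
(* of V (x) V are handled in Sweedler form as finite lists of pairs,  *)
(* and equalities in V (x) V (resp. V (x) V (x) V) are expressed      *)
(* through the universal property: equality after applying every      *)
(* bilinear (resp. trilinear) map into every C-vector space W.        *)

Definition linP (C : fieldType) (U V : lmodType C) (f : U -> V) : Prop :=
  forall (a : C) (x y : U), f (a *: x + y) = a *: f x + f y.

Definition bilinP (C : fieldType) (U V W : lmodType C) (b : U -> V -> W) : Prop :=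
  (forall u, linP (b u)) /\ (forall v, linP (fun u => b u v)).

Definition trilinP (C : fieldType) (U W : lmodType C) (t : U -> U -> U -> W) : Prop :=
  [/\ (forall u v, linP (t u v)), (forall u w, linP (fun v => t u v w))
    & (forall v w, linP (fun u => t u v w))].

Definition sw (V : Type) (W : nmodType) (cop : V -> seq (V * V))
  (b : V -> V -> W) (v : V) : W := \sum_(p <- cop v) b p.1 p.2.

Definition coalgebraP (C : fieldType) (V : lmodType C)
  (cop : V -> seq (V * V)) (eps : V -> C) : Prop :=
  [/\ (forall (W : lmodType C) (b : V -> V -> W), bilinP b -> linP (sw cop b)),
      (forall (a : C) (x y : V), eps (a *: x + y) = a * eps x + eps y),
      (forall (W : lmodType C) (t : V -> V -> V -> W), trilinP t -> forall v,
         \sum_(p <- cop v) \sum_(q <- cop p.1) t q.1 q.2 p.2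
         = \sum_(p <- cop v) \sum_(q <- cop p.2) t p.1 q.1 q.2),
      (forall v, \sum_(p <- cop v) eps p.1 *: p.2 = v)
    & (forall v, \sum_(p <- cop v) eps p.2 *: p.1 = v)].

Definition cocommutativeP (C : fieldType) (V : lmodType C)
  (cop : V -> seq (V * V)) : Prop :=
  forall (W : lmodType C) (b : V -> V -> W), bilinP b ->
    forall v, sw cop b v = sw cop (fun x y => b y x) v.

Definition hopfP (C : fieldType) (H : algType C)
  (cop : H -> seq (H * H)) (eps : H -> C) (S : H -> H) : Prop :=
  [/\ coalgebraP cop eps,
      (forall (W : lmodType C) (b : H -> H -> W), bilinP b -> forall x y : H,
         sw cop b (x * y)
         = \sum_(p <- cop x) \sum_(q <- cop y) b (p.1 * q.1) (p.2 * q.2)),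
      (forall (W : lmodType C) (b : H -> H -> W), bilinP b -> sw cop b 1 = b 1 1),
      (forall x y : H, eps (x * y) = eps x * eps y) /\ eps 1 = 1
    & [/\ linP S,
          (forall x, \sum_(p <- cop x) S p.1 * p.2 = (eps x)%:A)
        & (forall x, \sum_(p <- cop x) p.1 * S p.2 = (eps x)%:A)]].

(* Multi-indices are functions n : I -> nat of finite support.                *)
Definition fsupp (I : eqType) (n : I -> nat) (s : seq I) : Prop :=
  forall i, i \notin s -> n i = 0%N.

(* all a <= n (pointwise), for n supported in the duplicate-free list s *)
Fixpoint lowers (I : eqType) (s : seq I) (n : I -> nat) : seq (I -> nat) :=
  if s is i :: s' then
    flatten [seq [seq (fun j => if j == i then k else a j) | k <- iota 0 (n i).+1]
            | a <- lowers s' n]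
  else [:: fun _ => 0%N].

Definition zero_mi (I : Type) : I -> nat := fun _ => 0%N.

(* The coalgebra (V, cop, eps) is isomorphic to B(U) for some vector space U:  *)
(* V has a basis (e_n) indexed by finitely supported multi-indices n : I -> nat *)
(* with  Delta(e_n) = sum_{a+b=n} e_a (x) e_b  and  eps(e_n) = [n = 0].         *)
Definition BW_typeP (C : fieldType) (V : lmodType C)
  (cop : V -> seq (V * V)) (eps : V -> C) : Prop :=
  exists (I : eqType) (e : (I -> nat) -> V),
  [/\
      (forall v : V, exists (ns : seq (I -> nat)) (cs : seq C),
         [/\ forall k, (k < size ns)%N -> exists s, fsupp (nth (@zero_mi I) ns k) s,
             size cs = size ns
           & v = \sum_(k < size ns) cs`_k *: e (nth (@zero_mi I) ns k)]),
      (forall (ns : seq (I -> nat)) (cs : seq C),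
         (forall k, (k < size ns)%N -> exists s, fsupp (nth (@zero_mi I) ns k) s) ->
         size cs = size ns ->
         (forall j k, (j < k)%N -> (k < size ns)%N ->
            exists i, nth (@zero_mi I) ns j i <> nth (@zero_mi I) ns k i) ->
         \sum_(k < size ns) cs`_k *: e (nth (@zero_mi I) ns k) = 0 ->
         forall k, (k < size ns)%N -> cs`_k = 0),
      (forall (n : I -> nat) (s : seq I), uniq s -> fsupp n s ->
         forall (W : lmodType C) (b : V -> V -> W), bilinP b ->
         sw cop b (e n) = \sum_(a <- lowers s n) b (e a) (e (fun i => (n i - a i)%N)))
    &
      (forall (n : I -> nat) (s : seq I), fsupp n s ->
         eps (e n) = if all (fun i => n i == 0%N) s then 1 else 0)].

Definition monoidP (G : Type) (gmul : G -> G -> G) (gone : G) : Prop :=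
  [/\ forall x y z, gmul x (gmul y z) = gmul (gmul x y) z,
      forall x, gmul gone x = x
    & forall x, gmul x gone = x].

(* hact makes the algebra A a (left) CG-module algebra (Delta g = g (x) g, eps g = 1). *)
Definition CG_module_algebraP (C : fieldType) (G : Type) (gmul : G -> G -> G)
  (gone : G) (A : algType C) (hact : G -> A -> A) : Prop :=
  [/\ forall x, hact gone x = x,
      forall g h x, hact (gmul g h) x = hact g (hact h x),
      forall g, linP (hact g),
      forall g x y, hact g (x * y) = hact g x * hact g y
    & forall g, hact g 1 = 1].

Definition H_module_algebraP (C : fieldType) (H : algType C)
  (cop : H -> seq (H * H)) (eps : H -> C) (R : algType C) (dact : H -> R -> R) : Prop :=
  [/\ forall d, linP (dact d),
      forall a, linP (fun d => dact d a),
      (forall a, dact 1 a = a) /\ (forall x y a, dact (x * y) a = dact x (dact y a)),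
      forall d a b, dact d (a * b) = sw cop (fun x y => dact x a * dact y b) d
    & forall d, dact d 1 = eps d *: 1].

(* R is a D = D^1 # CG - module algebra, where the action of d # g is           *)
(* a |-> dact d (gact g a); this is equivalent to: R is a D^1-module algebra,   *)
(* a CG-module algebra, and the two actions satisfy the smash-product relation  *)
(* (1#g)(d#1) = (g.d)#g.                                                        *)
Definition D_module_algebraP (C : fieldType) (G : Type) (gmul : G -> G -> G) (gone : G)
  (D1 : algType C) (cop : D1 -> seq (D1 * D1)) (eps : D1 -> C) (hact : G -> D1 -> D1)
  (R : algType C) (dact : D1 -> R -> R) (gact : G -> R -> R) : Prop :=
  [/\ H_module_algebraP cop eps dact,
      CG_module_algebraP gmul gone gact
    & forall g d a, gact g (dact d a) = dact (hact g d) (gact g a)].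

Definition idealP (R : comNzRingType) (I : R -> Prop) : Prop :=
  [/\ I 0, forall x y, I x -> I y -> I (x + y) & forall r x, I x -> I (r * x)].

Definition primeP (R : comNzRingType) (P : R -> Prop) : Prop :=
  [/\ idealP P, ~ P 1 & forall a b, P (a * b) -> P a \/ P b].

Definition minimal_primeP (R : comNzRingType) (P : R -> Prop) : Prop :=
  primeP P /\
  forall Q, primeP Q -> (forall x, Q x -> P x) -> forall x, P x -> Q x.

Definition noetherianP (R : comNzRingType) : Prop :=
  forall I : nat -> R -> Prop, (forall n, idealP (I n)) ->
    (forall n x, I n x -> I n.+1 x) ->
    exists N, forall n, (N <= n)%N -> forall x, I n x -> I N x.

Definition D_stableP (D1 G R : Type) (dact : D1 -> R -> R) (gact : G -> R -> R)
  (I : R -> Prop) : Prop :=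
  (forall d x, I x -> I (dact d x)) /\ (forall g x, I x -> I (gact g x)).

Definition D_simpleP (D1 G : Type) (R : comNzRingType) (dact : D1 -> R -> R)
  (gact : G -> R -> R) : Prop :=
  forall I, idealP I -> D_stableP dact gact I -> (forall x, I x -> x = 0) \/ (forall x, I x).

Definition gpreim (G R : Type) (gact : G -> R -> R) (g : G) (P : R -> Prop) : R -> Prop :=
  fun x => P (gact g x).

Definition in_stab (G R : Type) (gact : G -> R -> R) (P : R -> Prop) (g : G) : Prop :=
  forall x, gpreim gact g P x <-> P x.

Definition in_stab_Omega (G : Type) (R : comNzRingType) (gact : G -> R -> R) (g : G) : Prop :=
  forall Q, minimal_primeP Q -> in_stab gact Q g.

(* Main.v *)
Require Import Defs.
From HB Require Import structures.
From mathcomp Require Import all_boot all_order all_algebra all_fingroup.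
From mathcomp Require Import boolp zify.
Set Implicit Arguments. Unset Strict Implicit. Unset Printing Implicit Defensive.
Import GRing.Theory.
Notation primeP := Defs.primeP.
Local Open Scope ring_scope.


Definition incl (T : Type) (A B : T -> Prop) := forall x, A x -> B x.

Lemma pred_ext (T : Type) (A B : T -> Prop) : incl A B -> incl B A -> A = B.
Proof. move=> h1 h2; apply: funext => x; apply: propext; split; [exact: h1|exact: h2]. Qed.

Section Ring.
Variable R : comNzRingType.
Implicit Types (I J P Q : R -> Prop).

Fixpoint prodin (Qs : seq (R -> Prop)) (I : R -> Prop) : Prop :=
  match Qs with
  | [::] => I 1
  | Q :: Qs' => forall q, Q q -> prodin Qs' (fun y => I (q * y))
  end.

Lemma prodin_mono Qs I J : incl I J -> prodin Qs I -> prodin Qs J.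
Proof.
elim: Qs I J => [|Q Qs IH] I J /= hIJ; first exact: hIJ.
move=> h q Qq; apply: (IH _ _ _ (h q Qq)) => y; exact: hIJ.
Qed.

Lemma prodin_cat Qs Qs' A B I : prodin Qs A -> prodin Qs' B ->
  (forall x y, A x -> B y -> I (x * y)) -> prodin (Qs ++ Qs') I.
Proof.
elim: Qs A I => [|Q Qs IH] A I /=.
  move=> A1 hB hAB; apply: prodin_mono hB => y By.
  by have := hAB _ _ A1 By; rewrite mul1r.
move=> hA hB hAB q Qq; apply: (IH _ _ (hA q Qq) hB) => x y Ax By.
by rewrite mulrA; exact: hAB.
Qed.

Lemma prodin_prime Qs I P : prodin Qs I -> incl I P -> primeP P ->
  exists2 Q, Q \in Qs & incl Q P.
Proof.
elim: Qs I => [|Q Qs IH] I /=.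
  by move=> I1 hIP [_ nP1 _]; case: nP1; exact: hIP.
move=> h hIP Pp; have [QP|] := pselect (incl Q P).
  by exists Q => //; rewrite inE eqxx.
move/existsNP=> [q /not_implyP [Qq nPq]].
have [|Q' Q'in Q'P] := IH _ (h q Qq) _ Pp.
  move=> y /hIP; case: Pp => _ _ /(_ q y) h2 /h2 [] //.
by exists Q' => //; rewrite inE Q'in orbT.
Qed.

Lemma ideal0 I : idealP I -> I 0. Proof. by case. Qed.
Lemma idealD I x y : idealP I -> I x -> I y -> I (x + y). Proof. by case=> _ h _; exact: h. Qed.
Lemma idealM I r x : idealP I -> I x -> I (r * x). Proof. by case=> _ _ h; exact: h. Qed.
Lemma idealMr I r x : idealP I -> I x -> I (x * r). Proof. by move=> h hx; rewrite mulrC; exact: idealM. Qed.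
Lemma idealN I x : idealP I -> I x -> I (- x).
Proof. by move=> h hx; rewrite -mulN1r; exact: idealM. Qed.
Lemma idealB I x y : idealP I -> I x -> I y -> I (x - y).
Proof. by move=> h hx hy; apply: idealD => //; exact: idealN. Qed.
Lemma ideal_sum I (T : eqType) (r : seq T) (F : T -> R) :
  idealP I -> (forall t, t \in r -> I (F t)) -> I (\sum_(t <- r) F t).
Proof.
move=> hI; elim: r => [|t r IH] h; first by rewrite big_nil; exact: ideal0.
rewrite big_cons; apply: idealD => //; first by apply: h; rewrite inE eqxx.
by apply: IH => u ur; apply: h; rewrite inE ur orbT.
Qed.

Definition Fprod I := exists Qs, (forall Q, Q \in Qs -> primeP Q) /\ prodin Qs I.

Definition addI I a : R -> Prop := fun z => exists i r, I i /\ z = i + r * a.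

Lemma addI_ideal I a : idealP I -> idealP (addI I a).
Proof.
move=> hI; split.
- by exists 0, 0; split; [exact: ideal0| rewrite mul0r addr0].
- move=> x y [i [r [Ii ->]]] [j [s [Ij ->]]]; exists (i + j), (r + s); split.
    exact: idealD.
  by rewrite mulrDl addrACA.
- move=> t x [i [r [Ii ->]]]; exists (t * i), (t * r); split; first exact: idealM.
  by rewrite mulrDr mulrA.
Qed.

Lemma addI_incl I a : idealP I -> incl I (addI I a).
Proof. by move=> hI x Ix; exists x, 0; rewrite mul0r addr0. Qed.

Lemma addI_a I a : idealP I -> addI I a a.
Proof. by move=> hI; exists 0, 1; split; [exact: ideal0|rewrite add0r mul1r]. Qed.

Lemma step_exists I : idealP I -> ~ Fprod I ->
  exists J, [/\ idealP J, incl I J, (exists x, J x /\ ~ I x) & ~ Fprod J].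
Proof.
move=> hI nF.
have nI1 : ~ I 1 by move=> I1; apply: nF; exists [::].
have : ~ primeP I.
  move=> Ip; apply: nF; exists [:: I]; split.
    by move=> Q; rewrite inE => /eqP ->.
  by move=> q Iq /=; rewrite mulr1.
move=> nP.
have [a [b [Iab [nIa nIb]]]] : exists a b, I (a * b) /\ ~ I a /\ ~ I b.
  apply: contrapT => hn; apply: nP; split => // a b Iab.
  have [Ia|nIa] := pselect (I a); first by left.
  have [Ib|nIb] := pselect (I b); first by right.
  by case: hn; exists a, b.
have [FA|nFA] := pselect (Fprod (addI I a)); last first.
  exists (addI I a); split => //; [exact: addI_ideal| exact: addI_incl|].
  by exists a; split => //; exact: addI_a.
have [FB|nFB] := pselect (Fprod (addI I b)); last first.
  exists (addI I b); split => //; [exact: addI_ideal| exact: addI_incl|].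
  by exists b; split => //; exact: addI_a.
case: nF; case: FA => Qs [hQs pA]; case: FB => Qs' [hQs' pB].
exists (Qs ++ Qs'); split.
  by move=> Q; rewrite mem_cat => /orP [] ?; [exact: hQs|exact: hQs'].
apply: prodin_cat pA pB _ => _ _ [i [r [Ii ->]]] [j [s [Ij ->]]].
rewrite mulrDl; apply: (idealD hI); first exact: idealMr.
rewrite mulrDr; apply: (idealD hI); first exact: idealM.
have -> : r * a * (s * b) = (r * s) * (a * b) by rewrite mulrACA.
exact: idealM.
Qed.

Lemma noeth_prod : noetherianP R -> forall I, idealP I -> Fprod I.
Proof.
move=> hN I0 hI0; apply: contrapT => nF0.
pose Pst I := exists J, [/\ idealP J, incl I J, (exists x, J x /\ ~ I x) & ~ Fprod J].
pose step I := match pselect (Pst I) with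
  | left H => projT1 (cid H) | right _ => I end.
pose c n := iter n step I0.
have inv : forall n, idealP (c n) /\ ~ Fprod (c n).
  elim=> [|n [IH1 IH2]] //=.
  rewrite /step; case: pselect => [H|H]; last by case: H; exact: step_exists.
  by case: (projT2 (cid H)).
have strict : forall n, incl (c n) (c n.+1) /\ exists x, c n.+1 x /\ ~ c n x.
  move=> n; have [h1 h2] := inv n; rewrite /= /step; case: pselect => [H|H].
    by case: (projT2 (cid H)).
  by case: H; exact: step_exists.
have [N hNc] := hN c (fun n => (inv n).1) (fun n => (strict n).1).
have [x [h1 h2]] := (strict N).2; apply: h2; exact: (hNc N.+1 (leqnSn N)).
Qed.

Lemma list_min (T : eqType) (rel : T -> T -> Prop) (s : seq T) :
  (forall x y z, rel x y -> rel y z -> rel x z) -> (forall x, rel x x) ->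
  forall x, x \in s -> exists y, [/\ y \in s, rel y x & forall z, z \in s -> rel z y -> rel y z].
Proof.
move=> tr rf; elim: s => [|a s IH] // x.
have key : forall y, y \in s -> (forall z, z \in s -> rel z y -> rel y z) ->
    exists y', [/\ y' \in a :: s, rel y' y & forall z, z \in a :: s -> rel z y' -> rel y' z].
  move=> y ys ymin.
  have [[ay nya]|] := pselect (rel a y /\ ~ rel y a).
    exists a; split; [by rewrite inE eqxx| by []|] => z; rewrite inE => /orP [/eqP -> //|zs] za.
    exact: tr _ _ _ ay (ymin z zs (tr _ _ _ za ay)).
  move=> hn; exists y; split => //; first by rewrite inE ys orbT.
  move=> z; rewrite inE => /orP [/eqP -> ay|zs zy]; last exact: ymin.
  by apply: contrapT => nya; apply: hn.
rewrite inE => /orP [/eqP ->|xs].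
  have [[x' [x's x'a]]|] := pselect (exists x', x' \in s /\ rel x' a).
    have [y [ys yx ymin]] := IH _ x's; have [y' [h1 h2 h3]] := key y ys ymin.
    by exists y'; split => //; apply: tr _ _ _ (tr _ _ _ h2 yx) x'a.
  move=> hn; exists a; split => //; first by rewrite inE eqxx.
  move=> z; rewrite inE => /orP [/eqP -> //|zs za]; by case: hn; exists z.
have [y [ys yx ymin]] := IH _ xs; have [y' [h1 h2 h3]] := key y ys ymin.
by exists y'; split => //; apply: tr _ _ _ h2 yx.
Qed.

End Ring.


Section Lowers.
Variable I : eqType.

Definition upd (n : I -> nat) (i : I) (k : nat) : I -> nat :=
  fun j => if j == i then k else n j.

Lemma lowers_cons (i : I) (s : seq I) (n : I -> nat) : lowers (i :: s) n =
  flatten [seq [seq upd a i k | k <- iota 0 (n i).+1] | a <- lowers s n].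
Proof. by []. Qed.

Lemma lowers_supp (s : seq I) (n a : I -> nat) : a \in lowers s n -> forall j, j \notin s -> a j = 0%N.
Proof.
elim: s a => [|i s IH] a; first by rewrite /= inE => /eqP ->.
rewrite lowers_cons; case/flattenP=> x /mapP [a' a's ->] /mapP [k _ ->] j.
rewrite inE negb_or => /andP [nji njs]; rewrite /upd (negbTE nji); exact: IH.
Qed.

Lemma eq_lowers (s : seq I) (n m : I -> nat) : (forall j, j \in s -> n j = m j) -> lowers s n = lowers s m.
Proof.
elim: s => [|i s IH] //= h; rewrite (h i (mem_head _ _)) IH //.
by move=> j js; apply: h; rewrite inE js orbT.
Qed.

End Lowers.

Section Domain.
Variable I : eqType.
Variable R : comNzRingType.
Variable P : R -> Prop.
Hypothesis hP : primeP P.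

Let hI : idealP P. Proof. by case: hP. Qed.

Lemma primeM a b : ~ P a -> ~ P b -> ~ P (a * b).
Proof. by move=> na nb h; case: hP => _ _ /(_ a b h) []. Qed.

Lemma series_domain (s : seq I) : uniq s -> forall (f g : (I -> nat) -> R) n0 m0,
  fsupp n0 s -> fsupp m0 s -> ~ P (f n0) -> ~ P (g m0) ->
  exists n, fsupp n s /\ ~ P (\sum_(c <- lowers s n) f c * g (fun j => (n j - c j)%N)).
Proof.
elim: s => [|i s IH].
  rewrite /=; move=> _ f g n0 m0 hn0 hm0 fn0 gm0; exists (@zero_mi I); split => //.
  rewrite big_seq1.
  have e0 : forall m : I -> nat, fsupp m [::] -> m = @zero_mi I.
    by move=> m hm; apply: funext => j; exact: hm.
  change (~ P (f (@zero_mi I) * g (@zero_mi I))).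
  rewrite (e0 _ hn0) in fn0; rewrite (e0 _ hm0) in gm0; exact: primeM.
rewrite [uniq _]/= => /andP [nis us] f g n0 m0 hn0 hm0 fn0 gm0.
pose pf k := `[< exists n, [/\ fsupp n (i :: s), ~ P (f n) & n i = k] >].
pose pg k := `[< exists n, [/\ fsupp n (i :: s), ~ P (g n) & n i = k] >].
have expf : exists k, pf k by exists (n0 i); apply/asboolP; exists n0.
have expg : exists k, pg k by exists (m0 i); apply/asboolP; exists m0.
case: (ex_minnP expf) => k0 /asboolP [n1 [hn1 fn1 n1i]] mink0.
case: (ex_minnP expg) => l0 /asboolP [m1 [hm1 gm1 m1i]] minl0.
have smallf : forall n, fsupp n (i :: s) -> (n i < k0)%N -> P (f n).
  move=> n hn lt; apply: contrapT => nfn.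
  have := mink0 (n i) (asboolT (ex_intro _ n (And3 hn nfn erefl))).
  by rewrite leqNgt lt.
have smallg : forall n, fsupp n (i :: s) -> (n i < l0)%N -> P (g n).
  move=> n hn lt; apply: contrapT => nfn.
  have := minl0 (n i) (asboolT (ex_intro _ n (And3 hn nfn erefl))).
  by rewrite leqNgt lt.
have suppS : forall n, fsupp n (i :: s) -> fsupp (upd n i 0) s.
  move=> n hn j js; rewrite /upd; case: eqP => // /eqP nji.
  by apply: hn; rewrite inE negb_or nji js.
have updK : forall n k, n i = k -> upd (upd n i 0) i k = n.
  move=> n k nik; apply: funext => j; rewrite /upd; case: eqP => // ->; by rewrite nik.
pose f' n := f (upd n i k0); pose g' n := g (upd n i l0).
have h1 : ~ P (f' (upd n1 i 0)) by rewrite /f' updK.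
have h2 : ~ P (g' (upd m1 i 0)) by rewrite /g' updK.
have [n' [hn' Pn']] := IH us f' g' _ _ (suppS _ hn1) (suppS _ hm1) h1 h2.
pose n := upd n' i (k0 + l0).
exists n; split.
  move=> j; rewrite inE negb_or => /andP [nji njs]; rewrite /n /upd (negbTE nji).
  exact: hn'.
rewrite lowers_cons.
have -> : lowers s n = lowers s n'.
  apply: eq_lowers => j js; rewrite /n /upd; case: eqP => // eji.
  by move: nis; rewrite -eji js.
have ni : n i = (k0 + l0)%N by rewrite /n /upd eqxx.
rewrite ni big_flatten /= big_map.
pose T a k := f (upd a i k) * g (upd (fun j => (n' j - a j)%N) i (k0 + l0 - k)).
have eT : forall a, \sum_(c <- [seq upd a i k | k <- iota 0 (k0 + l0).+1])
    f c * g (fun j => (n j - c j)%N) = \sum_(k <- iota 0 (k0 + l0).+1) T a k.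
  move=> a; rewrite big_map; apply: eq_bigr => k _; rewrite /T; congr (_ * g _).
  apply: funext => j; rewrite /n /upd; by case: eqP.
have k0in : k0 \in iota 0 (k0 + l0).+1 by rewrite mem_iota add0n ltnS leq_addr.
have split1 : forall a, a \in lowers s n' ->
    \sum_(k <- iota 0 (k0 + l0).+1) T a k
    = T a k0 + \sum_(k <- iota 0 (k0 + l0).+1 | k != k0) T a k.
  by move=> a _; rewrite (bigD1_seq k0) ?iota_uniq.
have restP : forall a, a \in lowers s n' ->
    P (\sum_(k <- iota 0 (k0 + l0).+1 | k != k0) T a k).
  move=> a ain; rewrite -big_filter; apply: ideal_sum => // k.
  rewrite mem_filter mem_iota add0n ltnS => /andP [nk0 kle].
  case: (ltngtP k k0) nk0 => // [klt|kgt] _.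
    apply: idealMr => //; apply: smallf; last by rewrite /upd eqxx.
    move=> j; rewrite inE negb_or => /andP [nji njs]; rewrite /upd (negbTE nji).
    exact: lowers_supp ain j njs.
  apply: idealM => //; apply: smallg; last by rewrite /upd eqxx; lia.
  move=> j; rewrite inE negb_or => /andP [nji njs]; rewrite /upd (negbTE nji).
  by rewrite (hn' j njs).
move=> Ptot; apply: Pn'.
move: Ptot; rewrite (eq_bigr _ (fun a _ => eT a)) (eq_big_seq _ split1) big_split => Ptot.
have -> : \sum_(c <- lowers s n') f' c * g' (fun j => (n' j - c j)%N)
    = \sum_(a <- lowers s n') T a k0 by apply: eq_bigr => a _; rewrite /T addKn.
have -> : \sum_(a <- lowers s n') T a k0 = (\sum_(a <- lowers s n') T a k0 +
     \sum_(a <- lowers s n') \sum_(k <- iota 0 (k0 + l0).+1 | k != k0) T a k) -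
     \sum_(a <- lowers s n') \sum_(k <- iota 0 (k0 + l0).+1 | k != k0) T a k.
  by rewrite addrK.
apply: idealB => //; apply: ideal_sum => //.
Qed.
End Domain.


Section Lin.
Variable C : fieldType.
Variables U V : lmodType C.
Variable f : U -> V.
Hypothesis hf : linP f.
Lemma lin0 : f 0 = 0.
Proof. have h := hf 1 0 0; rewrite !scale1r addr0 in h. by apply: (@addrI _ (f 0)); rewrite addr0 -h. Qed.
Lemma linD x y : f (x + y) = f x + f y.
Proof. by have := hf 1 x y; rewrite !scale1r. Qed.
Lemma linZ a x : f (a *: x) = a *: f x.
Proof. by have := hf a x 0; rewrite !addr0 lin0 addr0. Qed.
Lemma lin_sum n (F : 'I_n -> U) : f (\sum_(k < n) F k) = \sum_(k < n) f (F k).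
Proof. exact: (big_morph f linD lin0). Qed.
End Lin.

Section Stable.
Variable C : fieldType.
Variable D1 : algType C.
Variable cop : D1 -> seq (D1 * D1).
Variable eps : D1 -> C.
Variable R : comAlgType C.
Variable dact : D1 -> R -> R.
Hypothesis hMA : H_module_algebraP cop eps dact.
Variable I : eqType.
Variable e : (I -> nat) -> D1.
Hypothesis hspan : forall v : D1, exists (ns : seq (I -> nat)) (cs : seq C),
         [/\ forall k, (k < size ns)%N -> exists s, fsupp (nth (@zero_mi I) ns k) s,
             size cs = size ns
           & v = \sum_(k < size ns) cs`_k *: e (nth (@zero_mi I) ns k)].
Hypothesis hcop : forall (n : I -> nat) (s : seq I), uniq s -> fsupp n s ->
         forall (W : lmodType C) (b : D1 -> D1 -> W), bilinP b ->
         sw cop b (e n) = \sum_(a <- lowers s n) b (e a) (e (fun i => (n i - a i)%N)).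
Hypothesis heps : forall (n : I -> nat) (s : seq I), fsupp n s ->
         eps (e n) = if all (fun i => n i == 0%N) s then 1 else 0.

Lemma idealZ (P : R -> Prop) c x : idealP P -> P x -> P (c *: x).
Proof. by move=> hP Px; rewrite -[x]mul1r scalerAl; exact: idealM. Qed.

Lemma span_stable (P : R -> Prop) a : idealP P ->
  (forall n s, fsupp n s -> P (dact (e n) a)) -> forall d, P (dact d a).
Proof.
move=> hP h d; have [ns [cs [hs _ ->]]] := hspan d.
case: hMA => _ hl _ _ _.
rewrite (lin_sum (hl a)); apply: ideal_sum => // k _.
rewrite (linZ (hl a)); apply: idealZ => //.
have [s hs'] := hs k (ltn_ord k); exact: h hs'.
Qed.

Lemma prod_formula (n : I -> nat) (s : seq I) a b : uniq s -> fsupp n s ->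
  dact (e n) (a * b) = \sum_(c <- lowers s n) dact (e c) a * dact (e (fun i => (n i - c i)%N)) b.
Proof.
move=> us hn; case: hMA => hl1 hl2 _ hm _.
rewrite hm (hcop us hn) //; split.
  move=> u c x y; rewrite (hl2 b c x y) mulrDr; congr (_ + _).
  by rewrite scalerAr.
by move=> v c x y; rewrite (hl2 a c x y) mulrDl scalerAl.
Qed.

Lemma fsupp_undup (n : I -> nat) s : fsupp n s -> fsupp n (undup s).
Proof. by move=> h j; rewrite mem_undup; exact: h. Qed.

Theorem minimal_stable (P : R -> Prop) : minimal_primeP P -> forall d x, P x -> P (dact d x).
Proof.
move=> [Pp Pmin].
have hP : idealP P by case: Pp.
pose Q x := forall n s, fsupp n s -> P (dact (e n) x).
case: hMA => hl1 hl2 [h1 _] _ hunit.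
have QP : forall x, Q x -> P x.
  move=> x Qx; rewrite -(h1 x); apply: span_stable => //.
have Qp : primeP Q.
  split.
  - split.
    + by move=> n s _; rewrite (lin0 (hl1 _)); exact: ideal0.
    + by move=> x y Qx Qy n s hn; rewrite (linD (hl1 _)); apply: idealD => //; [exact: Qx hn|exact: Qy hn].
    + move=> r x Qx n s hn; rewrite (prod_formula _ _ (undup_uniq s) (fsupp_undup hn)).
      apply: ideal_sum => // c _; apply: idealM => //; apply: (Qx _ (undup s)).
      by move=> j js; rewrite (fsupp_undup hn js).
  - move=> Q1; case: Pp => _ nP1 _; apply: nP1.
    have := Q1 (@zero_mi I) [::] (fun _ _ => erefl).
    by rewrite hunit (heps (s := [::])) // scale1r.
  - move=> a b Qab; apply: contrapT => /not_orP [nQa nQb].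
    move: nQa => /existsNP [n0 /existsNP [s0 /not_implyP [hn0 Pn0]]].
    move: nQb => /existsNP [m0 /existsNP [s1 /not_implyP [hm0 Pm0]]].
    pose s := undup (s0 ++ s1).
    have hn0' : fsupp n0 s by move=> j; rewrite mem_undup mem_cat negb_or => /andP [] /hn0.
    have hm0' : fsupp m0 s by move=> j; rewrite mem_undup mem_cat negb_or => /andP [_] /hm0.
    have [n [hn nP]] := @series_domain I R P Pp s (undup_uniq _)
       (fun c => dact (e c) a) (fun c => dact (e c) b) _ _ hn0' hm0' Pn0 Pm0.
    by apply: nP; rewrite -(prod_formula _ _ (undup_uniq _) hn); exact: Qab hn.
have PQ := Pmin Q Qp QP.
move=> d x Px; apply: span_stable => // n s hn; exact: PQ x Px n s hn.
Qed.

End Stable.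


Section Main.
Variable C : fieldType.
Variables (G : Type) (gmul : G -> G -> G) (gone : G).
Variables (D1 : algType C) (cop : D1 -> seq (D1 * D1)) (eps : D1 -> C) (hact : G -> D1 -> D1).
Variables (R : comAlgType C) (dact : D1 -> R -> R) (gact : G -> R -> R).
Hypothesis hCG : CG_module_algebraP gmul gone gact.
Hypothesis hcomm : forall g d a, gact g (dact d a) = dact (hact g d) (gact g a).
Hypothesis hMA : H_module_algebraP cop eps dact.
Hypothesis stab1 : forall P : R -> Prop, minimal_primeP P -> forall d x, P x -> P (dact d x).
Hypothesis hsimp : D_simpleP dact gact.
Hypothesis hinj : forall (g : G) (x y : R), gact g x = gact g y -> x = y.
Variable Qs : seq (R -> Prop).
Hypothesis hQs : forall Q, Q \in Qs -> primeP Q.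
Hypothesis hQ0 : prodin Qs (fun x => x = 0).
Implicit Types (P Q M p J : R -> Prop).

Lemma gact1 g : gact g 1 = 1. Proof. by case: hCG. Qed.
Lemma gactM g x y : gact g (x * y) = gact g x * gact g y. Proof. by case: hCG. Qed.
Lemma gact_lin g : linP (gact g). Proof. by case: hCG. Qed.
Lemma gact0 g : gact g 0 = 0. Proof. exact: lin0 (gact_lin g). Qed.
Lemma gactD g x y : gact g (x + y) = gact g x + gact g y. Proof. by have := linD (gact_lin g) x y. Qed.
Lemma gact_one x : gact gone x = x. Proof. by case: hCG. Qed.
Lemma gact_mul g h x : gact (gmul g h) x = gact g (gact h x). Proof. by case: hCG. Qed.
Lemma gact_sum g (T : Type) (r : seq T) (F : T -> R) :
  gact g (\sum_(t <- r) F t) = \sum_(t <- r) gact g (F t).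
Proof. exact: (big_morph (gact g) (gactD g) (gact0 g)). Qed.
Lemma gact_prod g (T : Type) (r : seq T) (F : T -> R) :
  gact g (\prod_(t <- r) F t) = \prod_(t <- r) gact g (F t).
Proof. exact: (big_morph (gact g) (gactM g) (gact1 g)). Qed.

Lemma gpreim_mul g h P : gpreim gact (gmul g h) P = gpreim gact h (gpreim gact g P).
Proof. by apply: funext => x; rewrite /gpreim gact_mul. Qed.
Lemma gpreim_one P : gpreim gact gone P = P.
Proof. by apply: funext => x; rewrite /gpreim gact_one. Qed.

Lemma gpreim_prime g P : primeP P -> primeP (gpreim gact g P).
Proof.
move=> [[P0 PD PM] nP1 Pp]; split.
- split; rewrite /gpreim.
  + by rewrite gact0.
  + by move=> x y hx hy; rewrite gactD; exact: PD.
  + by move=> r x hx; rewrite gactM; exact: PM.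
- by rewrite /gpreim gact1.
- by move=> a b; rewrite /gpreim gactM; exact: Pp.
Qed.

Lemma prime_ideal P : primeP P -> idealP P. Proof. by case. Qed.

Lemma min_below P : primeP P -> exists M, minimal_primeP M /\ incl M P.
Proof.
move=> Pp.
have [Q Qin QP] := prodin_prime hQ0 (fun x (e : x = 0) => ltac:(rewrite e; exact: ideal0 (prime_ideal Pp))) Pp.
have [y [yin yQ ymin]] := @list_min _ (@incl R) Qs (fun x y z h1 h2 t ht => h2 t (h1 t ht))
   (fun x t ht => ht) Q Qin.
exists y; split; last by move=> t /yQ /QP.
split; first exact: hQs.
move=> Q' Q'p Q'y.
have [Q'' Q''in Q''Q'] := prodin_prime hQ0
  (fun x (e : x = 0) => ltac:(rewrite e; exact: ideal0 (prime_ideal Q'p))) Q'p.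
have := ymin Q'' Q''in (fun t ht => Q'y t (Q''Q' t ht)).
by move=> h t /h /Q''Q'.
Qed.

Lemma min_in M : minimal_primeP M -> M \in Qs.
Proof.
move=> [Mp Mmin].
have [Q Qin QM] := prodin_prime hQ0
  (fun x (e : x = 0) => ltac:(rewrite e; exact: ideal0 (prime_ideal Mp))) Mp.
have MQ := Mmin Q (hQs Qin) QM.
by rewrite (pred_ext QM MQ) in Qin.
Qed.

Definition Ul := undup [seq Q <- Qs | `[< minimal_primeP Q >]].
Lemma memUl Q : Q \in Ul <-> minimal_primeP Q.
Proof.
rewrite mem_undup mem_filter; split.
  by move=> /andP [/asboolP].
by move=> h; rewrite asboolT //= min_in.
Qed.

Definition k := size Ul.
Definition U (i : 'I_k) : R -> Prop := nth (fun _ => False) Ul i.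
Lemma U_min i : minimal_primeP (U i).
Proof. by apply/memUl; rewrite /U mem_nth. Qed.
Lemma U_inj : injective U.
Proof.
move=> i j /eqP; rewrite /U nth_uniq ?undup_uniq // => /eqP h; exact: val_inj.
Qed.
Lemma U_cover M : minimal_primeP M -> exists i, U i = M.
Proof.
move=> /memUl hM; have hi : (index M Ul < k)%N by rewrite index_mem.
by exists (Ordinal hi); rewrite /U /= nth_index.
Qed.

Lemma U_prime i : primeP (U i). Proof. by case: (U_min i). Qed.
Lemma U_ideal i : idealP (U i). Proof. exact: prime_ideal (U_prime i). Qed.

Lemma prodin_avoid g (p : R -> Prop) (Ps : seq (R -> Prop)) (J : R -> Prop) : primeP p ->
  prodin Ps J -> (forall Q, Q \in Ps -> exists u, ~ p u /\ Q (gact g u)) ->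
  exists u, ~ p u /\ J (gact g u).
Proof.
move=> pp; elim: Ps J => [|Q Ps IH] J /=.
  by move=> J1 _; exists 1; split; [by case: pp|rewrite gact1].
move=> h hQ; have [u0 [nu0 Qu0]] := hQ Q (mem_head _ _).
have [u [nu Ju]] := IH _ (h _ Qu0) (fun Q' Q'in => hQ Q' (@mem_behead _ (Q :: Ps) Q' Q'in)).
exists (u0 * u); split; first exact: primeM.
by rewrite gactM.
Qed.

Lemma lying_over g p : minimal_primeP p -> exists M, minimal_primeP M /\ gpreim gact g M = p.
Proof.
move=> [pp pmin].
have [[Q' [Q'in Q'p]]|hn] := pselect (exists Q', Q' \in Qs /\ incl (gpreim gact g Q') p).
  have [M [Mmin MQ']] := min_below (hQs Q'in).
  exists M; split => //.
  have h1 : incl (gpreim gact g M) p by move=> x hx; apply: Q'p; exact: MQ'.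
  exact: pred_ext h1 (pmin _ (gpreim_prime g (proj1 Mmin)) h1).
exfalso.
have hav : forall Q, Q \in Qs -> exists u, ~ p u /\ Q (gact g u).
  move=> Q Qin; apply: contrapT => hne; apply: hn; exists Q; split => // x hx.
  by apply: contrapT => nx; apply: hne; exists x.
have [u [nu hu]] := @prodin_avoid g p Qs _ pp hQ0 hav.
apply: nu; have -> : u = 0 by apply: (hinj (g := g)); rewrite hu gact0.
exact: ideal0 (prime_ideal pp).
Qed.

Lemma min_eq P Q : minimal_primeP P -> primeP Q -> incl Q P -> P = Q.
Proof. by move=> [_ Pmin] Qp QP; apply: pred_ext (Pmin Q Qp QP) QP. Qed.

Definition psi g (i : 'I_k) : 'I_k :=
  odflt i [pick j | `[< gpreim gact g (U j) = U i >]].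
Lemma psiP g i : gpreim gact g (U (psi g i)) = U i.
Proof.
rewrite /psi; case: pickP => [j /asboolP //|hn] /=.
have [M [Mmin hM]] := lying_over g (U_min i).
have [j hj] := U_cover Mmin.
by have := hn j; rewrite hj hM asboolT.
Qed.
Lemma psi_inj g : injective (psi g).
Proof. by move=> i j h; apply: U_inj; rewrite -(psiP g i) -(psiP g j) h. Qed.

Lemma gU g i : exists j, gpreim gact g (U i) = U j.
Proof.
have [f fK Kf] := injF_bij (@psi_inj g).
by exists (f i); rewrite -{1}(Kf i) psiP.
Qed.

Lemma gpreim_min g P : minimal_primeP P -> minimal_primeP (gpreim gact g P).
Proof. move=> /U_cover [i <-]; have [j ->] := gU g i; exact: U_min. Qed.

Definition fg g (i : 'I_k) : 'I_k :=
  odflt i [pick j | `[< U j = gpreim gact g (U i) >]].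
Lemma fgP g i : U (fg g i) = gpreim gact g (U i).
Proof.
rewrite /fg; case: pickP => [j /asboolP //|hn] /=.
have [j hj] := gU g i.
by have := hn j; rewrite hj asboolT.
Qed.
Lemma fg_inj g : injective (fg g).
Proof.
move=> a b h.
have [f fK Kf] := injF_bij (@psi_inj g).
have e : gpreim gact g (U a) = gpreim gact g (U b) by rewrite -!fgP h.
rewrite -(Kf a) -(Kf b) in e *; rewrite !psiP in e.
by rewrite (U_inj e).
Qed.
Lemma fg_mul g h i : fg (gmul g h) i = fg h (fg g i).
Proof. by apply: U_inj; rewrite fgP gpreim_mul -fgP -fgP. Qed.
Lemma fg_one i : fg gone i = i.
Proof. by apply: U_inj; rewrite fgP gpreim_one. Qed.

Lemma U_gact g i x : U i (gact g x) = U (fg g i) x.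
Proof. by rewrite fgP. Qed.

Lemma k_pos : exists i0 : 'I_k, True.
Proof.
case: Qs hQs hQ0 => [|Q Qs'] hs h0 /=.
  by exfalso; move: h0 => /eqP; rewrite oner_eq0.
have [M [Mmin _]] := min_below (hs Q (mem_head _ _)).
by have [i _] := U_cover Mmin; exists i.
Qed.

Lemma N0 x : (forall i, U i x) -> x = 0.
Proof.
pose N z := forall i, U i z.
have hN : idealP N.
  split.
  - by move=> i; exact: ideal0 (U_ideal i).
  - by move=> a b ha hb i; apply: idealD (U_ideal i) _ _.
  - by move=> r a ha i; apply: idealM (U_ideal i) _.
have [|h|h] := hsimp hN.
- split; first by move=> d z hz i; apply: stab1 (U_min i) _ _ _.
  by move=> g z hz i; rewrite U_gact.
- exact: h.
- by have [i0 _] := k_pos; have := h 1 i0; case: (U_prime i0).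
Qed.

Lemma JP0 P x : minimal_primeP P -> (forall g, P (gact g x)) -> x = 0.
Proof.
move=> Pm; have [Pp _] := Pm; have hP := prime_ideal Pp.
pose L z := forall g, P (gact g z).
have hL : idealP L.
  split.
  - by move=> g; rewrite gact0; exact: ideal0.
  - by move=> a b ha hb g; rewrite gactD; apply: idealD.
  - by move=> r a ha g; rewrite gactM; apply: idealM.
have [|h|h] := hsimp hL.
- split.
    by move=> d z hz g; rewrite hcomm; apply: stab1.
  by move=> g z hz h; rewrite -gact_mul.
- exact: h.
- by have := h 1 gone; rewrite gact1; case: Pp.
Qed.

Lemma avoid i0 : exists t, ~ U i0 t /\ forall j, j != i0 -> U j t.
Proof.
have pj : forall j, j != i0 -> exists z, U j z /\ ~ U i0 z.
  move=> j nj; apply: contrapT => hn.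
  have hincl : incl (U j) (U i0).
    by move=> z hz; apply: contrapT => nz; apply: hn; exists z.
  have e := min_eq (U_min i0) (U_prime j) hincl.
  by move: nj; rewrite (U_inj e) eqxx.
pose p j := match pselect (exists z, U j z /\ ~ U i0 z) with
  | left H => projT1 (cid H) | right _ => 1 end.
have hp : forall j, j != i0 -> U j (p j) /\ ~ U i0 (p j).
  move=> j nj; rewrite /p; case: pselect => [H|H]; first exact: (projT2 (cid H)).
  by case: H; exact: pj.
exists (\prod_(j | j != i0) p j); split.
  apply: (big_ind (fun z => ~ U i0 z)).
  - by case: (U_prime i0).
  - by move=> a b ha hb; exact: (primeM (U_prime i0) ha hb).
  - by move=> j nj; case: (hp j nj).
move=> j nj; rewrite (bigD1 j) //=; apply: idealMr (U_ideal j) _.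
by case: (hp j nj).
Qed.

Lemma part2b P Q : minimal_primeP P -> minimal_primeP Q ->
  exists g, forall x, gpreim gact g P x <-> Q x.
Proof.
move=> /U_cover [a <-] /U_cover [b <-].
have [t [nt ht]] := avoid b.
have tq : forall q, U b q -> t * q = 0.
  move=> q hq; apply: N0 => i; case: (eqVneq i b) => [->|nib].
    exact: idealM (U_ideal b) _.
  exact: idealMr (U_ideal i) (ht i nib).
have [g ng] : exists g, ~ U a (gact g t).
  apply: contrapT => hn; apply: nt; have -> : t = 0.
    by apply: (JP0 (U_min a)) => g; apply: contrapT => h; apply: hn; exists g.
  exact: ideal0 (U_ideal b).
have hincl : incl (U b) (gpreim gact g (U a)).
  move=> q hq; rewrite /gpreim.
  have : U a (gact g (t * q)) by rewrite tq // gact0; exact: ideal0 (U_ideal a).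
  by rewrite gactM; case: (U_prime a) => _ _ /[apply] [[]].
have e := min_eq (gpreim_min g (U_min a)) (U_prime b) hincl.
by exists g; rewrite e.
Qed.

Lemma part3a r : (forall P, minimal_primeP P -> P r) -> r = 0.
Proof. by move=> h; apply: N0 => i; apply: h; exact: U_min. Qed.

Lemma part3b (f : (R -> Prop) -> R) : exists r, forall P, minimal_primeP P -> P (r - f P).
Proof.
pose T x := exists u : 'I_k -> R, (forall i j, j != i -> U j (u i)) /\ x = \sum_i u i.
have hT : idealP T.
  split.
  - exists (fun _ => 0); split; last by rewrite big1.
    by move=> i j _; exact: ideal0 (U_ideal j).
  - move=> x y [u [hu ->]] [v [hv ->]]; exists (fun i => u i + v i); split.
      by move=> i j nj; apply: idealD (U_ideal j) _ _; [exact: hu|exact: hv].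
    by rewrite big_split.
  - move=> r x [u [hu ->]]; exists (fun i => r * u i); split.
      by move=> i j nj; apply: idealM (U_ideal j) _; exact: hu.
    by rewrite mulr_sumr.
have [i0 _] := k_pos.
have [t [nt ht]] := avoid i0.
have [|h|h] := hsimp hT.
- split.
    move=> d x [u [hu ->]]; exists (fun i => dact d (u i)); split.
      by move=> i j nj; apply: stab1 (U_min j) _ _ _; exact: hu.
    by case: hMA => hl1 _ _ _ _; rewrite (lin_sum (hl1 d)).
  move=> g x [u [hu ->]]; exists (fun i => gact g (u (fg g i))); split.
    move=> i j nj; rewrite U_gact; apply: hu.
    by apply: contra nj => /eqP /(@fg_inj g) ->.
  by rewrite gact_sum (reindex_inj (@fg_inj g)).
- exfalso; apply: nt.
  have -> : t = 0.
    apply: h; exists (fun i => if i == i0 then t else 0); split.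
      move=> i j nj; case: (eqVneq i i0) => [ei|ni]; last exact: ideal0 (U_ideal j).
      by apply: ht; rewrite -ei.
    rewrite (bigD1 i0) //= eqxx big1 ?addr0 // => i /negbTE ->; done.
  exact: ideal0 (U_ideal i0).
- have [u [hu hu1]] := h 1.
  exists (\sum_i u i * f (U i)) => P /U_cover [a <-].
  have -> : f (U a) = \sum_i u i * f (U a) by rewrite -mulr_suml -hu1 mul1r.
  rewrite -sumrB; apply: ideal_sum => [|i _]; first exact: U_ideal.
  rewrite -mulrBr; case: (eqVneq i a) => [->|nia].
    by rewrite subrr mulr0; exact: ideal0 (U_ideal a).
  by apply: idealMr (U_ideal a) _; apply: hu; rewrite eq_sym.
Qed.

Definition gpow g m := iter m (gmul g) gone.
Lemma fg_pow g m i : fg (gpow g m) i = iter m (fg g) i.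
Proof.
elim: m i => [|m IH] i /=; first exact: fg_one.
by rewrite fg_mul [fg (iter _ _ _) _]IH -iterSr.
Qed.

Lemma part1b P : minimal_primeP P ->
  forall J, idealP J -> (forall x, P x -> J x) ->
  (forall d x, J x -> J (dact d x)) ->
  (forall g : G, in_stab_Omega gact g -> forall x, J x -> J (gact g x)) ->
  (forall x, J x -> P x) \/ (forall x, J x).
Proof.
move=> Pm J hJ PJ hJd hJg.
have [a ea] := U_cover Pm; rewrite -ea in PJ *.
have [|] := pselect (incl J (U a)); first by left.
move=> /existsNP [x /not_implyP [Jx nx]].
have [J1|nJ1] := pselect (J 1).
  by right => z; rewrite -[z]mulr1; exact: idealM.
exfalso.
have [t [nt ht]] := avoid a.
pose hs (sg : {ffun 'I_k -> 'I_k}) : G :=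
  match pselect (exists h, fg h a = a /\ [ffun i => fg h i] = sg) with
  | left H => projT1 (cid H) | right _ => gone end.
have hs_fix : forall sg, fg (hs sg) a = a.
  move=> sg; rewrite /hs; case: pselect => [H|H]; last exact: fg_one.
  by case: (projT2 (cid H)).
have hs_spec : forall h, fg h a = a -> forall i, fg (hs [ffun i => fg h i]) i = fg h i.
  move=> h ha i; rewrite /hs; case: pselect => [H|H]; last by case: H; exists h.
  case: (projT2 (cid H)) => _ /(congr1 (fun F : {ffun 'I_k -> 'I_k} => F i)).
  by rewrite !ffunE.
pose y := t * \prod_(sg : {ffun 'I_k -> 'I_k}) gact (hs sg) x.
have ny : ~ U a y.
  apply: (primeM (U_prime a)) => //.
  apply: (big_ind (fun z => ~ U a z)).
  - by case: (U_prime a).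
  - by move=> u v hu hv; exact: (primeM (U_prime a) hu hv).
  - by move=> sg _; rewrite U_gact hs_fix.
apply: ny; have -> : y = 0; last exact: ideal0 (U_ideal a).
pose L z := forall g, J (gact g z).
have hL : idealP L.
  split.
  - by move=> g; rewrite gact0; exact: ideal0.
  - by move=> u v hu hv g; rewrite gactD; apply: idealD.
  - by move=> r u hu g; rewrite gactM; apply: idealM.
have [|h|h] := hsimp hL.
- split.
    by move=> d z hz g; rewrite hcomm; apply: hJd.
  by move=> g z hz h; rewrite -gact_mul.
- apply: h => g; rewrite /y gactM gact_prod.
  case: (eqVneq (fg g a) a) => [ga|nga]; last first.
    apply: idealMr => //; apply: PJ; rewrite U_gact; exact: ht.
  pose pg := perm (@fg_inj g).
  pose n := #[pg]%g.
  pose h := gpow g n.-1.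
  have ha : fg h a = a by rewrite fg_pow iter_fix.
  pose sg0 := [ffun i => fg h i].
  have hid : forall i, fg (gmul g (hs sg0)) i = i.
    move=> i; rewrite fg_mul hs_spec // -fg_mul.
    have -> : gmul g h = gpow g n by rewrite /h /gpow -iterS prednK // order_gt0.
    rewrite fg_pow.
    have <- : (pg ^+ n)%g i = iter n (fg g) i.
      by rewrite permX; apply: eq_iter => j; rewrite permE.
    by rewrite expg_order perm1.
  have hO : in_stab_Omega gact (gmul g (hs sg0)).
    move=> Q /U_cover [i <-] z; rewrite -fgP hid; done.
  have Jg := hJg _ hO x Jx; rewrite gact_mul in Jg.
  by rewrite (bigD1 sg0) //=; apply: idealM => //; apply: idealMr.
- by have := h 1 gone; rewrite gact1.
Qed.

Theorem main_sec :
  [/\ (forall P : R -> Prop, minimal_primeP P ->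
         forall d x, P x -> P (dact d x)),
      (forall P : R -> Prop, minimal_primeP P ->
         forall J : R -> Prop, idealP J -> (forall x, P x -> J x) ->
         (forall d x, J x -> J (dact d x)) ->
         (forall g : G, in_stab_Omega gact g -> forall x, J x -> J (gact g x)) ->
         (forall x, J x -> P x) \/ (forall x, J x)),
      (forall (P : R -> Prop) (g : G), minimal_primeP P -> minimal_primeP (gpreim gact g P)),
      (forall P Q : R -> Prop, minimal_primeP P -> minimal_primeP Q ->
         exists g : G, forall x, gpreim gact g P x <-> Q x)
    & (forall r : R, (forall P, minimal_primeP P -> P r) -> r = 0) /\
      (forall f : (R -> Prop) -> R, exists r : R,
         forall P, minimal_primeP P -> P (r - f P))].
Proof.
split.
- exact: stab1.
- exact: part1b.
- by move=> P g; exact: gpreim_min.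
- exact: part2b.
- by split; [exact: part3a|exact: part3b].
Qed.

End Main.

Unset Implicit Arguments.

Theorem mainTheorem10
  (C : fieldType)
  (G : Type) (gmul : G -> G -> G) (gone : G)
  (D1 : algType C) (cop : D1 -> seq (D1 * D1)) (eps : D1 -> C) (S : D1 -> D1)
  (hact : G -> D1 -> D1)
  (R : comAlgType C) (dact : D1 -> R -> R) (gact : G -> R -> R) :
  (* standing assumption (S) *)
  monoidP gmul gone ->
  hopfP cop eps S ->
  cocommutativeP cop ->
  BW_typeP cop eps ->
  CG_module_algebraP gmul gone hact ->
  (* R is a commutative D-module algebra, Noetherian, simple *)
  D_module_algebraP gmul gone cop eps hact dact gact ->
  noetherianP R ->
  D_simpleP dact gact ->
  (* each g acts injectively *)
  (forall (g : G) (x y : R), gact g x = gact g y -> x = y) ->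
  (* (1) *)
  [/\ (forall P : R -> Prop, minimal_primeP P ->
         forall d x, P x -> P (dact d x)),
      (forall P : R -> Prop, minimal_primeP P ->
         forall J : R -> Prop, idealP J -> (forall x, P x -> J x) ->
         (forall d x, J x -> J (dact d x)) ->
         (forall g : G, in_stab_Omega gact g -> forall x, J x -> J (gact g x)) ->
         (forall x, J x -> P x) \/ (forall x, J x)),
  (* (2) G acts on Omega(R) by P.g = g^{-1}(P), transitively *)
      (forall (P : R -> Prop) (g : G), minimal_primeP P -> minimal_primeP (gpreim gact g P)),
      (forall P Q : R -> Prop, minimal_primeP P -> minimal_primeP Q ->
         exists g : G, forall x, gpreim gact g P x <-> Q x)
  (* (3) R -> prod_{P in Omega(R)} R/P is bijective *)
    & (forall r : R, (forall P, minimal_primeP P -> P r) -> r = 0) /\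
      (forall f : (R -> Prop) -> R, exists r : R,
         forall P, minimal_primeP P -> P (r - f P))].
Proof.
move=> hmon hhopf hcoc hBW hCGh hD hN hsimp hinj.
case: hD => hMA hCG hcomm.
have [I [e [hspan _ hcop heps]]] := hBW.
have stab1 : forall P : R -> Prop, minimal_primeP P -> forall d x, P x -> P (dact d x).
  by move=> P; exact: (minimal_stable hMA hspan hcop heps).
have hI0 : idealP (fun x : R => x = 0).
  split => //; first by move=> x y -> ->; rewrite addr0.
  by move=> r x ->; rewrite mulr0.
have [Qs [hQs hQ0]] := noeth_prod hN hI0.
exact: (main_sec hCG hcomm hMA stab1 hsimp hinj hQs hQ0).
Qed.
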